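(* Let $\Delta: M_n\to M_n$ be a weak-2-local derivation, let $p_1,\ldots,p_n$ be mutually orthogonal minimal projections in $M_n$, and for $i,j\in\{1,\ldots,n\}$ let $e_{ij}$ be the unique minimal partial isometry in $M_n$ with $e_{ij}^*e_{ij}=p_j$ and $e_{ij}e_{ij}^*=p_i$. Then there exists $w_0\in M_n$ such that $\Delta\left(\sum_{k=1}^n\lambda_kp_k\right)=\left[w_0,\sum_{k=1}^n\lambda_kp_k\right]$ for all $\lambda_1,\ldots,\lambda_n\in\mathbb{C}$, and $\Delta(e_{1j})=[w_0,e_{1j}]$ for all $2\le j\le n$.
   Context: $M_n=M_n(\mathbb{C})$ and $[x,y]=xy-yx$. A derivation on a C$^*$-algebra $A$ is a linear map $D:A\to A$ with $D(ab)=D(a)b+aD(b)$. A (not necessarily linear) map $\Delta:A\to A$ is a weak-2-local derivation if for every $a,b\in A$ and every $\phi\in A^*$ there exists a derivation $D_{a,b,\phi}:A\to A$ such that $\phi\Delta(a)=\phi D_{a,b,\phi}(a)$ and $\phi\Delta(b)=\phi D_{a,b,\phi}(b)$. *)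

(* Defs.v *)
(* The complex numbers are modelled as R[i] = complex R for an
   arbitrary R : realType (mathcomp-real-closed's complex construction). *)
From HB Require Import structures.
From mathcomp Require Import all_boot all_order all_algebra.
From mathcomp Require Import complex.
From mathcomp Require Import reals.
Set Implicit Arguments. Unset Strict Implicit. Unset Printing Implicit Defensive.
Import Order.TTheory GRing.Theory Num.Theory.
Local Open Scope ring_scope.

Section Defs.
Variable (C : numClosedFieldType) (n : nat).
Local Notation M := 'M[C]_n.

Definition adjmx (a : M) : M := (map_mx Num.conj a)^T.

Definition commr (x y : M) : M := x * y - y * x.

Definition is_derivation (D : M -> M) : Prop :=
  (forall (c : C) (x y : M), D (c *: x + y) = c *: D x + D y) /\
  (forall x y : M, D (x * y) = D x * y + x * D y).

(* an element of the dual space M_n^*: a linear functional (M_n is finite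
   dimensional, so every linear functional is bounded) *)
Definition is_functional (phi : M -> C) : Prop :=
  forall (c : C) (x y : M), phi (c *: x + y) = c * phi x + phi y.

Definition weak_2_local_derivation (Delta : M -> M) : Prop :=
  forall (a b : M) (phi : M -> C), is_functional phi ->
    exists D : M -> M, is_derivation D /\
      phi (Delta a) = phi (D a) /\ phi (Delta b) = phi (D b).

Definition is_projection (p : M) : Prop := adjmx p = p /\ p * p = p.

Definition minimal_projection (p : M) : Prop :=
  is_projection p /\ p != 0 /\
  forall q : M, is_projection q -> q * p = q -> q = 0 \/ q = p.

End Defs.

(* Main.v *)
Require Import Defs.
From HB Require Import structures.
From mathcomp Require Import all_boot all_order all_algebra.
From mathcomp Require Import complex.
From mathcomp Require Import reals.
Import Order.TTheory GRing.Theory Num.Theory.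
Local Open Scope ring_scope.

Section Helpers.
Variables (C : numClosedFieldType) (m : nat).
Local Notation M := 'M[C]_m.+1.

Lemma adjmxM (a b : M) : adjmx (a * b) = adjmx b * adjmx a.
Proof. by rewrite /adjmx -!mulmxE map_mxM trmx_mul. Qed.

Lemma adjmxB (a b : M) : adjmx (a - b) = adjmx a - adjmx b.
Proof. by apply/matrixP => i j; rewrite /adjmx !mxE rmorphB. Qed.

Lemma adjmxK (a : M) : adjmx (adjmx a) = a.
Proof. by apply/matrixP => i j; rewrite /adjmx !mxE conjCK. Qed.

Lemma adjmx_eq0 (f : M) : adjmx f * f = 0 -> f = 0.
Proof.
move=> H; apply/matrixP => k i; rewrite mxE.
have Hii : \sum_t `|f t i| ^+ 2 = 0.
  have := congr1 (fun x : M => x i i) H; rewrite -mulmxE mxE.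
  rewrite (_ : (0 : M) i i = 0); last by rewrite mxE.
  move=> E; rewrite -[RHS]E; apply: eq_bigr => t _; by rewrite /adjmx !mxE normCK mulrC.
have := psumr_eq0P (P := predT) (fun t _ => exprn_ge0 2 (normr_ge0 (f t i))) Hii (i := k) isT.
by move/eqP; rewrite sqrf_eq0 normr_eq0 => /eqP.
Qed.

Variable D : M -> M.
Hypothesis HD : is_derivation D.

Lemma D0 : D 0 = 0.
Proof. case: HD => Hl _; have := Hl 1 0 0; rewrite !scale1r addr0 => H.
by apply: (@addrI _ (D 0)); rewrite addr0 -H. Qed.
Lemma DD x y : D (x + y) = D x + D y.
Proof. case: HD => Hl _; have := Hl 1 x y; by rewrite !scale1r. Qed.
Lemma DZ c x : D (c *: x) = c *: D x.
Proof. case: HD => Hl _; have := Hl c x 0; by rewrite !addr0 D0 addr0. Qed.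
Lemma DM x y : D (x * y) = D x * y + x * D y.
Proof. by case: HD. Qed.
Lemma Dsum (I : finType) (F : I -> M) : D (\sum_i F i) = \sum_i D (F i).
Proof. apply: (big_morph D DD D0). Qed.

Lemma Didem (p : M) : p * p = p -> p * D p * p = 0.
Proof.
move=> pp.
have H : p * D p * p = p * D p * p + p * D p * p.
  by rewrite {2}(_ : p = p * p) // DM mulrDr mulrDl -!mulrA pp !mulrA pp.
by apply: (@addrI _ (p * D p * p)); rewrite addr0 -H.
Qed.

Lemma Dorth (p q q' : M) : p * p = p -> q * p = 0 -> p * q' = 0 -> q * D p * q' = 0.
Proof.
move=> pp qp pq; rewrite -{1}pp DM mulrDr mulrDl -!mulrA pq !mulr0 add0r.
by rewrite !mulrA qp !mul0r.
Qed.

Lemma Dcross (p q : M) : p * p = p -> q * q = q -> p * q = 0 ->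
  p * D p * q = - (p * D q * q).
Proof.
move=> pp qq pq; apply/eqP; rewrite -subr_eq0 opprK.
have := congr1 D pq; rewrite D0 DM => H.
have := congr1 (fun x => p * x * q) H; rewrite mulr0 mul0r mulrDr mulrDl.
by rewrite -!mulrA qq !mulrA pp => ->.
Qed.

End Helpers.

Section H2.
Variables (C : numClosedFieldType) (m : nat).
Local Notation M := 'M[C]_m.+1.

Lemma tool (Delta : M -> M) : weak_2_local_derivation Delta ->
  forall (L R a b : M) (c : C),
  (forall D, is_derivation D -> L * D a * R = c *: (L * D b * R)) ->
  L * Delta a * R = c *: (L * Delta b * R).
Proof.
move=> W L R a b c H; apply/matrixP => t v.
have Hf : is_functional (fun x : M => (L * x * R) t v).
  by move=> c' x y; rewrite mulrDr mulrDl -scalerAr -scalerAl !mxE.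
have [D [HD [E1 E2]]] := W a b _ Hf.
by rewrite /= in E1 E2; rewrite [RHS]mxE E1 E2 H // mxE.
Qed.

Lemma sum_proj (p : 'I_m.+1 -> M) : (forall k, p k * p k = p k) ->
  (forall k, p k != 0) -> (forall k l, k != l -> p k * p l = 0) ->
  \sum_k p k = 1.
Proof.
move=> pp pne po.
set P := \sum_k p k.
have pQ : forall l, p l * (1 - P) = 0.
  move=> l; rewrite mulrBr mulr1 /P mulr_sumr (bigD1 l) //= pp big1 ?addr0 ?subrr //.
  by move=> k kl; apply: po; rewrite eq_sym.
pose ik k := odflt ord0 [pick i | row i (p k) != 0].
have ikP : forall k, row (ik k) (p k) != 0.
  move=> k; rewrite /ik; case: pickP => [i Hi //|H] /=.
  exfalso; move/negP: (pne k); apply; apply/eqP/row_matrixP => i; rewrite row0.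
  by move: (H i) => /negbFE/eqP.
pose V := \matrix_(k, c) p k (ik k) c.
have rowV : forall k, row k V = row (ik k) (p k).
  by move=> k; apply/rowP => c; rewrite !mxE.
have VQ : V *m (1 - P) = 0.
  apply/row_matrixP => k; rewrite row_mul rowV -row_mul mulmxE pQ !row0 //.
have Vu : V \in unitmx.
  rewrite -row_free_unit -kermx_eq0; apply/eqP/row_matrixP => a; rewrite row0.
  set x := row a (kermx V).
  have xV : x *m V = 0 by rewrite -row_mul mulmx_ker row0.
  apply/rowP => l; rewrite [RHS]mxE.
  have : (x *m V) *m p l = x 0 l *: row (ik l) (p l).
    rewrite (mulmx_sum_row x V) mulmx_suml (bigD1 l) //= big1 ?addr0.
      by rewrite -scalemxAl rowV -row_mul mulmxE pp.
    by move=> k kl; rewrite -scalemxAl rowV -row_mul mulmxE po // row0 scaler0.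
  rewrite xV mul0mx => /esym/eqP; rewrite scaler_eq0 (negbTE (ikP l)) orbF.
  by move/eqP.
have : 1 - P = 0 by rewrite -(mulKmx Vu (1 - P)) VQ mulmx0.
by move/subr0_eq/esym.
Qed.

End H2.

Section H3.
Variables (C : numClosedFieldType) (m : nat).
Local Notation M := 'M[C]_m.+1.
Variable p : 'I_m.+1 -> M.
Hypothesis pp : forall k, p k * p k = p k.
Hypothesis po : forall k l, k != l -> p k * p l = 0.

Lemma pmul r k : p r * p k = if r == k then p r else 0.
Proof. by case: eqVneq => [->|rk]; [rewrite pp | rewrite po]. Qed.

Lemma pa_l (lam : 'I_m.+1 -> C) r : p r * (\sum_k lam k *: p k) = lam r *: p r.
Proof.
rewrite mulr_sumr (bigD1 r) //= big1 ?addr0; first by rewrite -scalerAr pp.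
by move=> k kr; rewrite -scalerAr po ?scaler0 // eq_sym.
Qed.

Lemma pa_r (lam : 'I_m.+1 -> C) s : (\sum_k lam k *: p k) * p s = lam s *: p s.
Proof.
rewrite mulr_suml (bigD1 s) //= big1 ?addr0; first by rewrite -scalerAl pp.
by move=> k kr; rewrite -scalerAl po ?scaler0.
Qed.

Lemma blocksum (F : 'I_m.+1 -> 'I_m.+1 -> M) r s :
  p r * (\sum_r' \sum_s' p r' * F r' s' * p s') * p s = p r * F r s * p s.
Proof.
rewrite mulr_sumr mulr_suml (bigD1 r) //= [X in _ + X]big1 ?addr0.
  rewrite mulr_sumr mulr_suml (bigD1 s) //= [X in _ + X]big1 ?addr0.
    by rewrite !mulrA pp -!mulrA pp.
  move=> s' ss'; rewrite !mulrA -(mulrA _ (p s')) (po _ _ ss') mulr0 //.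
by move=> r' rr'; rewrite mulr_sumr mulr_suml big1 // => s' _;
  rewrite !mulrA (pmul r r') eq_sym (negbTE rr') !mul0r.
Qed.

Lemma Dblock D : is_derivation D -> forall (lam : 'I_m.+1 -> C) r s,
  p r * D (\sum_k lam k *: p k) * p s =
  if r == s then 0 else (lam s - lam r) *: (p r * D (p s) * p s).
Proof.
move=> HD lam r s; rewrite Dsum // mulr_sumr mulr_suml.
under eq_bigr => k _ do rewrite DZ // -scalerAr -scalerAl.
case: eqVneq => [<-|rs].
  rewrite big1 // => k _; case: (eqVneq k r) => [->|kr].
    by rewrite Didem // scaler0.
  by rewrite Dorth ?scaler0 // po // eq_sym.
rewrite (bigD1 s) //= (bigD1 r) //= [X in _ + (_ + X)]big1 ?addr0.
  by rewrite Dcross // ?po // scalerN scalerBl addrC.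
move=> k /andP[ks kr]; rewrite Dorth ?scaler0 // po //; first by rewrite eq_sym.
Qed.

End H3.
Arguments pa_l {C m p} pp po lam r.
Arguments pa_r {C m p} pp po lam s.
Arguments blocksum {C m p} pp po F r s.
Arguments Dblock {C m p} pp po D _ lam r s.
Arguments sum_proj {C m} p _ _ _.
Arguments tool {C m} Delta _ L R a b c _.
Arguments pmul {C m p} pp po r k.
Arguments Dorth {C m D} HD {p q q'} _ _ _.
Arguments DM {C m D} HD x y.

Theorem proposition2p10 (R : realType) (m : nat)
    (Delta : 'M[R[i]]_m.+1 -> 'M[R[i]]_m.+1)
    (p : 'I_m.+1 -> 'M[R[i]]_m.+1)
    (e : 'I_m.+1 -> 'I_m.+1 -> 'M[R[i]]_m.+1) :
  weak_2_local_derivation Delta ->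
  (forall k, minimal_projection (p k)) ->
  (forall k l, k != l -> p k * p l = 0) ->
  (forall k l, adjmx (e k l) * e k l = p l /\ e k l * adjmx (e k l) = p k) ->
  exists w0 : 'M[R[i]]_m.+1,
    (forall lambda : 'I_m.+1 -> R[i],
       Delta (\sum_k lambda k *: p k) = commr w0 (\sum_k lambda k *: p k)) /\
    (forall j : 'I_m.+1, j != ord0 -> Delta (e ord0 j) = commr w0 (e ord0 j)).
Proof.
move=> W Hmin po He.
have pp k : p k * p k = p k by case: (Hmin k) => [[_ ->]].
have adjp k : adjmx (p k) = p k by case: (Hmin k) => [[-> _]].
have pne k : p k != 0 by case: (Hmin k) => [_ [-> _]].
have sum1 := sum_proj p pp pne po.
have decomp : forall X Y : 'M[R[i]]_m.+1,
    (forall r s, p r * X * p s = p r * Y * p s) -> X = Y.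
  have E : forall X : 'M[R[i]]_m.+1, X = \sum_r \sum_s p r * X * p s.
    move=> X; under eq_bigr => r _ do rewrite -mulr_sumr sum1 mulr1.
    by rewrite -mulr_suml sum1 mul1r.
  by move=> X Y H; rewrite (E X) (E Y); apply: eq_bigr => r _;
    apply: eq_bigr => s _; apply: H.
pose mu (k : 'I_m.+1) : R[i] := (k : nat)%:R.
have mune r s : r != s -> mu s - mu r != 0.
  move=> rs; rewrite subr_eq0 eqr_nat; apply: contra rs => /eqP rs.
  by apply/eqP/val_inj.
pose A0 := Delta (\sum_k mu k *: p k).
pose Braw (r s : 'I_m.+1) := if r == s then
   (if r == ord0 then 0 else - (adjmx (e ord0 r) * Delta (e ord0 r)))
   else (mu s - mu r)^-1 *: A0.
pose B r s := p r * Braw r s * p s.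
pose w := \sum_r \sum_s B r s.
have pwp r s : p r * w * p s = B r s by rewrite /w /B (blocksum pp po).
have part1 (lam : 'I_m.+1 -> R[i]) r s :
    p r * Delta (\sum_k lam k *: p k) * p s = (lam s - lam r) *: B r s.
  case: (eqVneq r s) => [<-|rs].
    rewrite subrr scale0r.
    rewrite (tool Delta W _ _ _ (\sum_k lam k *: p k) 0) ?scale0r //.
    by move=> D HD; rewrite (Dblock pp po) // eqxx scale0r.
  rewrite (tool Delta W _ _ _ (\sum_k mu k *: p k) ((lam s - lam r) / (mu s - mu r))).
    by rewrite /B /Braw (negbTE rs) -scalerAr -scalerAl scalerA.
  move=> D HD; rewrite !(Dblock pp po) // (negbTE rs) scalerA divfK //.
  exact: mune.
have comblock (a : 'M[R[i]]_m.+1) r s :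
    p r * commr w a * p s = p r * w * (a * p s) - (p r * a) * (w * p s).
  by rewrite /commr mulrBr mulrBl !mulrA.
have P1 (lam : 'I_m.+1 -> R[i]) :
    Delta (\sum_k lam k *: p k) = commr w (\sum_k lam k *: p k).
  apply: decomp => r s; rewrite comblock part1 (pa_l pp po) (pa_r pp po).
  rewrite -scalerAr -scalerAl mulrA pwp scalerBl; congr (_ - _).
exists w; split => // j j0.
set e0 := e ord0 j.
set es := adjmx e0.
have [ee ee'] := He ord0 j.
rewrite -/e0 -/es in ee ee'.
have p0e : p ord0 * e0 = e0.
  apply/eqP; rewrite -subr_eq0; apply/eqP/adjmx_eq0.
  rewrite adjmxB adjmxM adjp -/es mulrBr !mulrBl.
  have h : es * p ord0 * e0 = p j by rewrite -ee' !mulrA ee -mulrA ee pp.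
  by rewrite !mulrA -(mulrA es) pp h ee !subrr.
have ep : e0 * p j = e0.
  apply/eqP; rewrite -subr_eq0; apply/eqP/adjmx_eq0.
  rewrite adjmxB adjmxM adjp -/es mulrBr !mulrBl.
  by rewrite !mulrA -(mulrA (p j) es) !ee !pp !subrr.

have esp : p j * es = es by rewrite /es -[e0 in RHS]ep adjmxM adjp.
have esp0 : es * p ord0 = es by rewrite /es -[e0 in RHS]p0e adjmxM adjp.
have j0' : ord0 != j by rewrite eq_sym.
have e0p0 : e0 * p ord0 = 0 by rewrite -ep -mulrA (po _ _ j0) mulr0.
have eps r : e0 * p r = if r == j then e0 else 0.
  by rewrite -{1}ep -mulrA (pmul pp po) eq_sym; case: (eqVneq r j) => [_|_]; rewrite ?mulr0 ?ep.
have pe r : p r * e0 = if r == ord0 then e0 else 0.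
  by rewrite -{1}p0e mulrA (pmul pp po); case: (eqVneq r ord0) => [->|_]; rewrite ?mul0r ?p0e.
have sumk k : \sum_l (l == k)%:R *: p l = p k.
  rewrite (bigD1 k) //= eqxx scale1r big1 ?addr0 // => l /negbTE ->.
  by rewrite scale0r.
have Dpk k r s : p r * Delta (p k) * p s = ((s == k)%:R - (r == k)%:R) *: B r s.
  by have := part1 (fun l => (l == k)%:R) r s; rewrite sumk.
have Ha r s : r != ord0 -> s != j -> p r * Delta e0 * p s = 0.
  move=> r0 sj; rewrite (tool Delta W _ _ e0 e0 0) ?scale0r // => D HD.
  rewrite scale0r -{1}p0e (DM HD) mulrDr mulrDl -!mulrA eps (negbTE sj).
  by rewrite !mulr0 add0r !mulrA (po _ _ r0) !mul0r.
apply: decomp => r s; rewrite comblock eps pe.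
case: (eqVneq r ord0) => [->|r0]; case: (eqVneq s j) => [->|sj].
-
  have -> : p ord0 * w * e0 = 0.
    by rewrite -p0e mulrA pwp /B /Braw !eqxx mulr0 !mul0r.
  have -> : e0 * (w * p j) = e0 * B j j by rewrite -{1}ep -mulrA (mulrA (p j)) pwp.
  rewrite /B /Braw eqxx (negbTE j0) -/e0 -/es.
  by rewrite !(mulrN, mulNr) sub0r opprK !mulrA ep ee'.
-
  rewrite mulr0 sub0r.
  have -> : e0 * (w * p s) = e0 * B j s by rewrite -{1}ep -mulrA (mulrA (p j)) pwp.
  have js : j != s by rewrite eq_sym.
  have T := tool Delta W (p j + es) (p s) e0 (p j) 1.
  rewrite scale1r in T.
  have hA : es * Delta e0 * p s = es * (p ord0 * Delta e0 * p s).
    by rewrite -{1}esp0 !mulrA.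
  have hB : es * Delta (p j) * p s = 0.
    rewrite -{1}esp0 -!mulrA (mulrA (p ord0)) Dpk (negbTE sj) (negbTE j0').
    by rewrite subrr scale0r mulr0.
  have T' : es * (p ord0 * Delta e0 * p s) = - B j s.
    rewrite -hA; move: T; rewrite !mulrDl (Ha j s j0 sj) add0r hB addr0 Dpk.
    rewrite (negbTE sj) eqxx sub0r scaleN1r; apply => D HD.
    rewrite scale1r -{1}ep (DM HD) !mulrDr !mulrDl !mulrA.
    rewrite -!(mulrA _ (p j) (p s)) (po _ _ js) !mulr0 !add0r pe (negbTE j0) !mul0r add0r ee.
    by rewrite -[es]esp0 -(mulrA es) -(mulrA es) (Dorth HD (pp j) (po _ _ j0') (po _ _ js)) mulr0 addr0.
  have -> : B j s = - (es * (p ord0 * Delta e0 * p s)) by rewrite T' opprK.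
  by rewrite mulrN opprK mulrA ee' !mulrA pp.
-
  rewrite mul0r subr0.
  have -> : p r * w * e0 = B r ord0 * e0 by rewrite -{1}p0e mulrA pwp.
  have T : p r * Delta e0 * (p ord0 + es) = p r * Delta (p ord0) * (p ord0 + es).
    rewrite -[RHS]scale1r; apply: (tool Delta W) => D HD.
    rewrite scale1r -{1}p0e (DM HD) (mulrDr (p r)) mulrDl (mulrA (p r) (p ord0)) (po _ _ r0) !mul0r addr0.
    rewrite mulrA -(mulrA _ e0) mulrDr e0p0 ee' add0r.
    by rewrite mulrDr -esp mulrA (Dorth HD (pp ord0) (po _ _ r0) (po _ _ j0')) mul0r addr0.
  have X : p r * Delta e0 * p j = p r * Delta e0 * (p ord0 + es) * e0.
    by rewrite mulrDr mulrDl (Ha r ord0 r0 j0') mul0r add0r -(mulrA _ es) ee.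
  rewrite X T -(mulrA _ (p ord0 + es)) mulrDl p0e ee mulrDr.
  rewrite (Dpk ord0 r j) (negbTE j0) (negbTE r0) subrr scale0r addr0.
  by rewrite -{1}p0e mulrA (Dpk ord0 r ord0) eqxx (negbTE r0) subr0 scale1r.
-
  by rewrite mulr0 mul0r subr0 Ha.
Qed.
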